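(* Let $n,m\ge1$, $q_1,\dots,q_m\in\Delta_n$, $d\in\mathbb{R}^{n^2}_+$, and let $\mathcal Z=\mathcal X\times\mathcal Y$, $G$, $\hat A$, $\mathcal E$ be as in the context. Define the regularizer on $\mathcal Z$ \[r(\mathbf x,\mathbf y)=\frac{2\|d\|_\infty}{m}\Big(10\sum_{i=1}^m\langle x_i,\log x_i\rangle+5m\langle p,\log p\rangle+\hat x^\top\hat A^\top(\mathbf y)^2-p^\top\mathcal E^\top(\mathbf y)^2\Big),\] where $\hat x=(x_1^\top,\dots,x_m^\top)^\top$ and $\log$, $(\cdot)^2$ act entrywise. Then $r$ is $3$-area-convex with respect to $G$, i.e. for all $\boldsymbol a,\boldsymbol b,\boldsymbol c\in\mathcal Z$, \[3\Big(r(\boldsymbol a)+r(\boldsymbol b)+r(\boldsymbol c)-3r\big(\tfrac{\boldsymbol a+\boldsymbol b+\boldsymbol c}{3}\big)\Big)\ge\langle G(\boldsymbol a)-G(\boldsymbol b),\boldsymbol b-\boldsymbol c\rangle.\]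
   Context: $\Delta_k=\{p\in\mathbb{R}^k_+:\sum_j p_j=1\}$. $\mathcal X=(\Delta_{n^2})^m\times\Delta_n$ with elements $\mathbf x=(x_1,\dots,x_m,p)$, $\mathcal Y=[-1,1]^{2mn}$ with elements $\mathbf y=(y_1,\dots,y_m)$, $y_i\in[-1,1]^{2n}$. $A\in\{0,1\}^{2n\times n^2}$ is the incidence matrix with $Ax=(X\mathbf 1;X^\top\mathbf 1)$ for $x$ the vectorization of $X\in\mathbb{R}^{n\times n}$. $\hat A$ is block diagonal with $m$ diagonal blocks $A$; $\mathcal E\in\mathbb{R}^{2mn\times n}$ consists of $m$ vertically stacked blocks each equal to $-\begin{pmatrix}I_n\\0_{n\times n}\end{pmatrix}$; $\boldsymbol A=(\hat A\ \ \mathcal E)$. $\boldsymbol d=(d,\dots,d,0_n)$, $\boldsymbol c=(0_n,q_1,\dots,0_n,q_m)$. $G(\mathbf x,\mathbf y)=\frac1m\big(\boldsymbol d+2\|d\|_\infty\boldsymbol A^\top\mathbf y,\ 2\|d\|_\infty(\boldsymbol c-\boldsymbol A\mathbf x)\big)$, the gradient operator $(\nabla_{\mathbf x}F,-\nabla_{\mathbf y}F)$ of $F(\mathbf x,\mathbf y)=\frac1m\{\boldsymbol d^\top\mathbf x+2\|d\|_\infty(\mathbf y^\top\boldsymbol A\mathbf x-\boldsymbol c^\top\mathbf y)\}$. Convention $0\log0=0$. *)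

(* Defs.v *)
From HB Require Import structures.
From mathcomp Require Import all_boot all_order all_algebra.
From mathcomp Require Import reals exp.
Set Implicit Arguments. Unset Strict Implicit. Unset Printing Implicit Defensive.
Import Order.TTheory GRing.Theory Num.Theory.
Local Open Scope ring_scope.

Section Defs.
Variables (R : realType) (m n : nat).

(* A point z = (x_1..x_m, p, y_1..y_m) of R^{m n^2} x R^n x R^{2mn}.
   x i j k = (X^{(i)})_{jk}  (x_i = vectorization of X^{(i)} in R^{n x n});
   y_i = (yr i ; yc i) in R^{2n}: yr i pairs with X^{(i)} 1 (row sums),
   yc i pairs with X^{(i)T} 1 (column sums). *)
Record pt := Pt {
  px : 'I_m -> 'I_n -> 'I_n -> R ;
  pp : 'I_n -> R ;
  pyr : 'I_m -> 'I_n -> R ;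
  pyc : 'I_m -> 'I_n -> R }.

Definition pt_add (a b : pt) : pt :=
  Pt (fun i j k => px a i j k + px b i j k) (fun j => pp a j + pp b j)
     (fun i j => pyr a i j + pyr b i j) (fun i j => pyc a i j + pyc b i j).
Definition pt_scale (s : R) (a : pt) : pt :=
  Pt (fun i j k => s * px a i j k) (fun j => s * pp a j)
     (fun i j => s * pyr a i j) (fun i j => s * pyc a i j).
Definition pt_sub (a b : pt) : pt := pt_add a (pt_scale (-1) b).

Definition pt_dot (a b : pt) : R :=
  \sum_(i < m) \sum_(j < n) \sum_(k < n) px a i j k * px b i j k
  + \sum_(j < n) pp a j * pp b j
  + \sum_(i < m) \sum_(j < n) pyr a i j * pyr b i j
  + \sum_(i < m) \sum_(k < n) pyc a i k * pyc b i k.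

Definition in_simplex (v : 'I_n -> R) :=
  (forall j, 0 <= v j) /\ \sum_(j < n) v j = 1.
Definition in_simplex2 (v : 'I_n -> 'I_n -> R) :=
  (forall j k, 0 <= v j k) /\ \sum_(j < n) \sum_(k < n) v j k = 1.

Definition inZ (z : pt) : Prop :=
  (forall i, in_simplex2 (px z i)) /\ in_simplex (pp z) /\
  (forall i j, -1 <= pyr z i j <= 1) /\ (forall i k, -1 <= pyc z i k <= 1).

Definition dnorm (d : 'I_n -> 'I_n -> R) : R :=
  \big[Num.max/0]_(j < n) \big[Num.max/0]_(k < n) `|d j k|.

(* The operator G(x,y) = (1/m)(dd + 2||d|| A^T y, 2||d||(c - A x)), written
   blockwise:  (A^T y)_x-block i, entry (j,k) = yr i j + yc i k;
   (A^T y)_p = E^T y = - sum_i yr i;  (A x)_i = (X^{(i)}1 - p ; X^{(i)T}1);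
   c_i = (0 ; q_i);  dd = (d,...,d,0). *)
Definition Gop (q : 'I_m -> 'I_n -> R) (d : 'I_n -> 'I_n -> R) (z : pt) : pt :=
  let D := dnorm d in
  Pt (fun i j k => m%:R^-1 * (d j k + 2 * D * (pyr z i j + pyc z i k)))
     (fun j => m%:R^-1 * (2 * D * (- \sum_(i < m) pyr z i j)))
     (fun i j => m%:R^-1 * (2 * D * (0 - (\sum_(k < n) px z i j k - pp z j))))
     (fun i k => m%:R^-1 * (2 * D * (q i k - \sum_(j < n) px z i j k))).

(* t log t, with the convention 0 log 0 = 0 *)
Definition xlnx (t : R) : R := t * ln t.

(* the regularizer r; here
   xhat^T Ahat^T (y)^2 = sum_i sum_{j,k} x i j k (yr i j ^2 + yc i k ^2),
   p^T E^T (y)^2 = - sum_j p j sum_i yr i j ^2 *)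
Definition reg (d : 'I_n -> 'I_n -> R) (z : pt) : R :=
  2 * dnorm d / m%:R *
  (10 * \sum_(i < m) \sum_(j < n) \sum_(k < n) xlnx (px z i j k)
   + 5 * m%:R * \sum_(j < n) xlnx (pp z j)
   + \sum_(i < m) \sum_(j < n) \sum_(k < n)
        px z i j k * (pyr z i j ^+ 2 + pyc z i k ^+ 2)
   - \sum_(j < n) pp z j * (- \sum_(i < m) pyr z i j ^+ 2)).

End Defs.

(* Main.v *)
Require Import Defs.
From HB Require Import structures.
From mathcomp Require Import all_boot all_order all_algebra.
From mathcomp Require Import reals exp.
From mathcomp Require Import boolp classical_sets functions topology normedtype sequences derive.
From mathcomp Require Import ring lra.
Import Order.TTheory GRing.Theory Num.Theory.
Import numFieldNormedType.Exports.
Local Open Scope classical_set_scope.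
Local Open Scope ring_scope.

Section Scalar.
Variable R : realType.
Lemma mvt_ge0 (f df : R -> R) (y : R) : 0 <= y ->
  (forall x : R, is_derive x (1:R) f (df x)) -> (forall x, 0 <= x -> 0 <= df x) ->
  f 0 <= f y.
Proof.
move=> y0 H dge.
have cf : {within `[0, y], continuous f}.
  apply: continuous_subspaceT => x.
  apply: differentiable_continuous; apply/derivable1_diffP.
  by have [] := H x.
have [c cI E] := MVT_segment y0 (fun x _ => H x) cf.
have c0 : 0 <= c by move: cI; rewrite in_itv /= => /andP[].
rewrite -subr_ge0 E mulr_ge0 // ?subr_ge0 //; by apply: dge.
Qed.

Lemma E1 (y : R) : 0 <= y -> 0 <= (y - 2) * expR y + y + 2.
Proof.
move=> y0.
pose f : R -> R := ((id - cst 2) * expR + id + cst 2)%R.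
pose df : R -> R := fun x => (x - 1) * expR x + 1.
have H : forall x : R, is_derive x (1:R) f (df x).
  move=> x; apply: is_derive_eq.
  rewrite /df /= -![_ *: _]/(_ * _) !fctE /=; ring.
have dge : forall x, 0 <= x -> 0 <= df x.
  move=> x x0; rewrite /df.
  have := expR_ge1Dx (- x); rewrite expRN => h.
  have ex := expR_gt0 x.
  have h1 : 0 <= (expR x)^-1 - (1-x) by rewrite subr_ge0.
  have := mulr_ge0 (ltW ex) h1.
  rewrite mulrBr mulfV ?gt_eqF // => h2. nra.
have := @mvt_ge0 f df y y0 H dge.
rewrite /f !fctE /= expR0; lra.
Qed.

Lemma E2 (y : R) : 0 <= y -> 2 * y * expR y <= expR y * expR y - 1.
Proof.
move=> y0.
pose f : R -> R := (expR * expR - cst 1 - (cst 2 * id) * expR)%R.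
pose df : R -> R := fun x => 2 * expR x * (expR x - 1 - x).
have H : forall x : R, is_derive x (1:R) f (df x).
  move=> x; apply: is_derive_eq.
  rewrite /df /= -![_ *: _]/(_ * _) !fctE /=; ring.
have dge : forall x, 0 <= x -> 0 <= df x.
  move=> x x0; rewrite /df.
  have := expR_ge1Dx x.
  have ex := expR_gt0 x.
  move=> h'; apply: mulr_ge0; lra.
have := @mvt_ge0 f df y y0 H dge.
rewrite /f !fctE /= expR0; lra.
Qed.

Lemma comb (a b u v : R) :
  `|u * b - v * a| <= `|a * u| + `|b * v| + `|(a + b) * (u + v)|.
Proof.
rewrite !normrM.
case: (lerP 0 a) => ha; case: (lerP 0 b) => hb; case: (lerP 0 u) => hu; case: (lerP 0 v) => hv;
rewrite ?(ger0_norm ha) ?(ltr0_norm ha) ?(ger0_norm hb) ?(ltr0_norm hb) ?(ger0_norm hu) ?(ltr0_norm hu) ?(ger0_norm hv) ?(ltr0_norm hv);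
case: (lerP 0 (u * b - v * a)) => h1;
rewrite ?(ger0_norm h1) ?(ltr0_norm h1);
case: (lerP 0 (a + b)) => h2;
rewrite ?(ger0_norm h2) ?(ltr0_norm h2);
case: (lerP 0 (u + v)) => h3;
rewrite ?(ger0_norm h3) ?(ltr0_norm h3).
all: try nra.
Qed.
Lemma absT (T x : R) : -1 <= T <= 1 -> - `|x| <= T * x.
Proof. move=> /andP[h1 h2]; case: (lerP 0 x) => hx; rewrite ?(ger0_norm hx) ?(ltr0_norm hx); nra. Qed.

Lemma ppt (s S T u e : R) : 0 <= s -> 0 < S -> -1 <= T <= 1 -> -1 <= T + u <= 1 ->
  (S <= s -> (s - S)^+2 <= e * (s + S)) -> (s <= S -> (s - S)^+2 <= 2 * S * e) ->
  `|(s - S) * u| <= 5 * e + s * u^+2 + 2 * T * (s - S) * u.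
Proof.
move=> s0 S0 hT /andP[U1 U2] e1 e2.
have uu : u^+2 = `|u|^+2 by rewrite -normrX ger0_norm ?sqr_ge0.
rewrite uu.
case: (lerP S s) => hs.
  have {e1 e2} e1 := e1 hs.
  have hsg : 0 <= s - S by rewrite subr_ge0.
  have hsS : 0 < s + S by lra.
  have ee : (s - S)^+2 / (s + S) <= e by rewrite ler_pdivrMr.
  have hb := @absT T (2 * (s - S) * u) hT.
  rewrite !normrM (ger0_norm hsg) ger0_norm // in hb.
  rewrite normrM (ger0_norm hsg).
  suff : 3 * (s - S) * `|u| <= 5 * e + s * `|u|^+2.
    nra.
  set v := `|u|. have v0 : 0 <= v := normr_ge0 u.
  rewrite -subr_ge0 -(pmulr_rge0 _ hsS).
  suff : 0 <= 5 * (s - S)^+2 + s * (s + S) * v^+2 - 3 * (s - S) * v * (s + S) by nra.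
  have hq : 0 <= (2 * (s * (s + S)) * v - 3 * (s - S) * (s + S))^+2 + (s - S)^+2 * (s + S) * (11 * s - 9 * S).
    apply: addr_ge0; first exact: sqr_ge0.
    apply: mulr_ge0; [apply: mulr_ge0; [exact: sqr_ge0|lra]|lra].
  have hal : 0 < 4 * (s * (s + S)) by nra.
  rewrite -(pmulr_rge0 _ hal).
  suff -> : 4 * (s * (s + S)) * (5 * (s - S)^+2 + s * (s + S) * v^+2 - 3 * (s - S) * v * (s + S)) = (2 * (s * (s + S)) * v - 3 * (s - S) * (s + S))^+2 + (s - S)^+2 * (s + S) * (11 * s - 9 * S) by [].
  ring.
have {e1 e2} e2 := e2 (ltW hs).
have hsl : s - S < 0 by rewrite subr_lt0.
rewrite normrM (ltr0_norm hsl).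
have ee : (s - S)^+2 / (2 * S) <= e by rewrite ler_pdivrMr ?mulr_gt0 // mulrC.
set w := S - s.
have w0 : 0 < w by rewrite /w subr_gt0.
have hw : (s - S)^+2 = w^+2 by rewrite /w; ring.
rewrite hw in ee.
suff : 3 * w * `|u| <= 5 * e + (s + 2 * w) * `|u|^+2.
  case/andP: hT => T1 T2.
  case: (lerP 0 u) => hu; rewrite ?(ger0_norm hu) ?(ltr0_norm hu).
    have : 0 <= w * u * (1 - T - u) by apply: mulr_ge0; [apply: mulr_ge0; lra| lra].
    rewrite /w; nra.
  have : 0 <= w * (- u) * (T + u + 1) by apply: mulr_ge0; [apply: mulr_ge0; lra| lra].
  rewrite /w; nra.
set v := `|u|. have v0 : 0 <= v := normr_ge0 u.
have h2S : 0 < 2 * S by lra.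
have hs' : s + 2 * w = S + w by rewrite /w; ring.
rewrite hs' -subr_ge0 -(pmulr_rge0 _ h2S).
have e3 : w^+2 <= 2 * S * e by rewrite -hw.
suff : 0 <= 5 * w^+2 + 2 * S * (S + w) * v^+2 - 6 * S * w * v by nra.
have hq : 0 <= (2 * (2 * S * (S + w)) * v - 6 * S * w)^+2 + 4 * S * w^+2 * (S + 10 * w).
  apply: addr_ge0; first exact: sqr_ge0.
  apply: mulr_ge0; [apply: mulr_ge0; [lra|exact: sqr_ge0]|lra].
have hal : 0 < 4 * (2 * S * (S + w)) by nra.
rewrite -(pmulr_rge0 _ hal).
suff -> : 4 * (2 * S * (S + w)) * (5 * w ^+ 2 + 2 * S * (S + w) * v ^+ 2 - 6 * S * w * v) = (2 * (2 * S * (S + w)) * v - 6 * S * w)^+2 + 4 * S * w^+2 * (S + 10 * w) by [].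
ring.
Qed.
Lemma L1 (x : R) : 1 <= x -> 2 * (x - 1) <= ln x * (x + 1).
Proof.
move=> x1; have x0 : 0 < x by lra.
have := @E1 (ln x) (ln_ge0 x1); rewrite lnK ?posrE //; nra.
Qed.

Lemma L2 (x : R) : 0 < x -> x <= 1 -> x^+2 - 1 <= 2 * x * ln x.
Proof.
move=> x0 x1.
have y0 : 0 <= - ln x by rewrite oppr_ge0 ln_le0.
have := @E2 _ y0; rewrite expRN lnK ?posrE // => h.
have hx : x^-1 * x = 1 by rewrite mulVf ?gt_eqF.
have hx2 : 0 < x^+2 by rewrite exprn_gt0.
rewrite -subr_ge0 -(pmulr_rge0 _ hx2) in h.
rewrite -subr_ge0.
suff -> : x ^+ 2 - 1 = - (x ^+ 2 * ((x^-1) * (x^-1) - 1)) + 0 by move: h; set L := ln x; nra.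
rewrite mulrBr expr2 mulr1. 
rewrite -!mulrA (mulrA x x^-1) mulfV ?gt_eqF // mul1r mulfV ?gt_eqF //; ring.
Qed.

Definition ee (s S : R) := xlnx s - xlnx S - (ln S + 1) * (s - S).

Lemma ee_b (s S : R) : 0 <= s -> 0 < S ->
  (S <= s -> (s - S)^+2 <= ee s S * (s + S)) /\ (s <= S -> (s - S)^+2 <= 2 * S * ee s S).
Proof.
move=> s0 S0; rewrite /ee /xlnx.
case: (ltrP 0 s) => sp; last first.
  have -> : s = 0 by lra.
  split => h; first lra.
  rewrite mul0r; nra.
have hl : ln s = ln S + ln (s / S) by rewrite -lnM ?posrE ?divr_gt0 // mulrC divfK ?gt_eqF.
rewrite hl.
have xp : 0 < s / S by rewrite divr_gt0.
have sx : s = (s / S) * S by rewrite divfK ?gt_eqF.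
set x := s / S in xp sx *; set L := ln x.
split => h.
  have x1 : 1 <= x by rewrite /x ler_pdivlMr // mul1r.
  have := @L1 x x1; rewrite -/L => hL.
  rewrite sx. 
  have : 0 <= x * S * (L * (x + 1) - 2 * (x - 1)) * S by apply: mulr_ge0; [apply: mulr_ge0; lra|lra].
  nra.
have x1 : x <= 1 by rewrite /x ler_pdivrMr // mul1r.
have := @L2 x xp x1; rewrite -/L => hL.
rewrite sx.
have : 0 <= (2 * x * L - (x^+2 - 1)) * (S * S) by apply: mulr_ge0; [lra|nra].
nra.
Qed.
Definition hh (s t : R) := 5 * xlnx s + s * t^+2.

Lemma pp' (s S T t : R) : 0 <= s -> 0 < S -> -1 <= T <= 1 -> -1 <= t <= 1 ->
  `|(s - S) * (t - T)| <= 5 * ee s S + s * (t - T)^+2 + 2 * T * (s - S) * (t - T).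
Proof.
move=> s0 S0 hT ht; have [h1 h2] := @ee_b s S s0 S0.
apply: ppt => //. by rewrite addrC subrK.
Qed.

Lemma tri (sa sb sc ta tb tc : R) : 0 <= sa -> 0 <= sb -> 0 <= sc ->
  -1 <= ta <= 1 -> -1 <= tb <= 1 -> -1 <= tc <= 1 ->
  `|(ta - tb) * (sb - sc) - (sa - sb) * (tb - tc)| <=
  3 * (hh sa ta + hh sb tb + hh sc tc
       - 3 * hh (3%:R^-1 * (sa + sb + sc)) (3%:R^-1 * (ta + tb + tc))).
Proof.
move=> a0 b0 c0 ha hb hc.
set S := 3%:R^-1 * (sa + sb + sc); set T := 3%:R^-1 * (ta + tb + tc).
have hT : -1 <= T <= 1.
  case/andP: ha => ? ?; case/andP: hb => ? ?; case/andP: hc => ? ?.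
  rewrite /T; apply/andP; split; lra.
have S0 : 0 <= S by rewrite /S; lra.
case: (ltrP 0 S) => Sp; last first.
  have ea : sa = 0 by rewrite /S in Sp; lra.
  have eb : sb = 0 by rewrite /S in Sp; lra.
  have ec : sc = 0 by rewrite /S in Sp; lra.
  rewrite /S ea eb ec /hh /xlnx !mul0r !addr0 !mulr0 !mul0r !subr0.
  have -> : (ta - tb) * 0 - 0 * (tb - tc) = 0 by ring.
  rewrite normr0; lra.
have Id : hh sa ta + hh sb tb + hh sc tc - 3 * hh S T =
   (5 * ee sa S + sa * (ta - T)^+2 + 2 * T * (sa - S) * (ta - T))
 + (5 * ee sb S + sb * (tb - T)^+2 + 2 * T * (sb - S) * (tb - T))
 + (5 * ee sc S + sc * (tc - T)^+2 + 2 * T * (sc - S) * (tc - T)).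
  by rewrite /hh /ee /S /T; field.
have IdB : (ta - tb) * (sb - sc) - (sa - sb) * (tb - tc) =
   3 * ((ta - T) * (sb - S) - (tb - T) * (sa - S)).
  by rewrite /S /T; field.
have IdC : ((sa - S) + (sb - S)) * ((ta - T) + (tb - T)) = (sc - S) * (tc - T).
  by rewrite /S /T; field.
rewrite Id IdB normrM (ger0_norm (_ : 0 <= 3)) // ler_pM2l //.
apply: le_trans (comb _ _ _ _) _.
rewrite IdC.
have := @pp' sa S T ta a0 Sp hT ha; have := @pp' sb S T tb b0 Sp hT hb; have := @pp' sc S T tc c0 Sp hT hc.

lra.
Qed.
End Scalar.
Arguments hh {R}.
Arguments ee {R}.

Section Sums.
Set Implicit Arguments. Unset Strict Implicit.
Variables (R : realType) (m n : nat).
Definition S3 (F : 'I_m -> 'I_n -> 'I_n -> R) := \sum_(i < m) \sum_(j < n) \sum_(k < n) F i j k.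
Definition S2 (F : 'I_m -> 'I_n -> R) := \sum_(i < m) \sum_(j < n) F i j.
Lemma S3D F G : S3 (fun i j k => F i j k + G i j k) = S3 F + S3 G.
Proof. rewrite /S3 -big_split; apply: eq_bigr => i _; rewrite -big_split; apply: eq_bigr => j _; by rewrite -big_split. Qed.
Lemma S3Z x F : S3 (fun i j k => x * F i j k) = x * S3 F.
Proof. rewrite /S3 mulr_sumr; apply: eq_bigr => i _; rewrite mulr_sumr; apply: eq_bigr => j _; by rewrite mulr_sumr. Qed.
Lemma S3_ext F G : (forall i j k, F i j k = G i j k) -> S3 F = S3 G.
Proof. move=> h; rewrite /S3; apply: eq_bigr => i _; apply: eq_bigr => j _; apply: eq_bigr => k _; exact: h. Qed.
Lemma S2D F G : S2 (fun i j => F i j + G i j) = S2 F + S2 G.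
Proof. rewrite /S2 -big_split; apply: eq_bigr => i _; by rewrite -big_split. Qed.
Lemma S2Z x F : S2 (fun i j => x * F i j) = x * S2 F.
Proof. rewrite /S2 mulr_sumr; apply: eq_bigr => i _; by rewrite mulr_sumr. Qed.
Lemma S2_ext F G : (forall i j, F i j = G i j) -> S2 F = S2 G.
Proof. move=> h; rewrite /S2; apply: eq_bigr => i _; apply: eq_bigr => j _; exact: h. Qed.
Lemma S3_le F G : (forall i j k, F i j k <= G i j k) -> S3 F <= S3 G.
Proof. move=> h; rewrite /S3; apply: ler_sum => i _; apply: ler_sum => j _; apply: ler_sum => k _; exact: h. Qed.
Lemma S2_le F G : (forall i j, F i j <= G i j) -> S2 F <= S2 G.
Proof. move=> h; rewrite /S2; apply: ler_sum => i _; apply: ler_sum => j _; exact: h. Qed.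
Lemma S3comb x F1 F2 F3 F4 : x * (S3 F1 + S3 F2 + S3 F3 - 3 * S3 F4) =
  S3 (fun i j k => x * (F1 i j k + F2 i j k + F3 i j k - 3 * F4 i j k)).
Proof.
have -> : S3 (fun i j k => x * (F1 i j k + F2 i j k + F3 i j k - 3 * F4 i j k)) =
  S3 (fun i j k => x * F1 i j k + x * F2 i j k + x * F3 i j k + (- (3 * x)) * F4 i j k).
  by apply: S3_ext => i j k; ring.
by rewrite !S3D !S3Z; ring.
Qed.
Lemma S2comb x F1 F2 F3 F4 : x * (S2 F1 + S2 F2 + S2 F3 - 3 * S2 F4) =
  S2 (fun i j => x * (F1 i j + F2 i j + F3 i j - 3 * F4 i j)).
Proof.
have -> : S2 (fun i j => x * (F1 i j + F2 i j + F3 i j - 3 * F4 i j)) =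
  S2 (fun i j => x * F1 i j + x * F2 i j + x * F3 i j + (- (3 * x)) * F4 i j).
  by apply: S2_ext => i j; ring.
by rewrite !S2D !S2Z; ring.
Qed.
End Sums.

Definition Bt {R : realType} (sa sb sc ta tb tc : R) := (ta - tb) * (sb - sc) - (sa - sb) * (tb - tc).

Lemma EL (R : realType) (n m : nat) (q : 'I_m -> 'I_n -> R) (d : 'I_n -> 'I_n -> R) (a b c : pt R m n) :
  pt_dot (pt_sub (Gop q d a) (Gop q d b)) (pt_sub b c) =
  S3 (fun i j k => (2 * dnorm d / m%:R) * (Bt (px a i j k) (px b i j k) (px c i j k) (pyr a i j) (pyr b i j) (pyr c i j)
                       + Bt (px a i j k) (px b i j k) (px c i j k) (pyc a i k) (pyc b i k) (pyc c i k)))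
  + S2 (fun i j => - (2 * dnorm d / m%:R) * Bt (pp a j) (pp b j) (pp c j) (pyr a i j) (pyr b i j) (pyr c i j)).
Proof.
set K := 2 * dnorm d / m%:R.
rewrite /pt_dot /pt_sub /pt_add /pt_scale /Gop /=.
have Ex : \sum_(i < m) \sum_(j < n) \sum_(k < n)
           (m%:R^-1 * (d j k + 2 * dnorm d * (pyr a i j + pyc a i k)) +
            -1 * (m%:R^-1 * (d j k + 2 * dnorm d * (pyr b i j + pyc b i k)))) *
           (px b i j k + -1 * px c i j k)
  = S3 (fun i j k => K * ((pyr a i j - pyr b i j) * (px b i j k - px c i j k)
                          + (pyc a i k - pyc b i k) * (px b i j k - px c i j k))).
  apply: S3_ext => i j k; rewrite /K; ring.
have Ep : \sum_(j < n)
     (m%:R^-1 * (2 * dnorm d * - \sum_(i < m) pyr a i j) +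
      -1 * (m%:R^-1 * (2 * dnorm d * - \sum_(i < m) pyr b i j))) *
     (pp b j + -1 * pp c j)
  = S2 (fun i j => - K * (pyr a i j - pyr b i j) * (pp b j - pp c j)).
  rewrite /S2 exchange_big /=; apply: eq_bigr => j _.
  rewrite -mulr_suml -mulr_sumr sumrB /K; ring.
have Er : \sum_(i < m) \sum_(j < n)
        (m%:R^-1 *
         (2 * dnorm d * (0 - (\sum_(k < n) px a i j k - pp a j))) +
         -1 *
         (m%:R^-1 *
          (2 * dnorm d * (0 - (\sum_(k < n) px b i j k - pp b j))))) *
        (pyr b i j + -1 * pyr c i j)
  = S3 (fun i j k => - K * (px a i j k - px b i j k) * (pyr b i j - pyr c i j))
    + S2 (fun i j => K * ((pp a j - pp b j) * (pyr b i j - pyr c i j))).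
  rewrite /S3 /S2 -big_split; apply: eq_bigr => i _; rewrite -big_split; apply: eq_bigr => j _ /=.
  rewrite -mulr_suml -mulr_sumr sumrB /K; ring.
have Ec : \sum_(i < m)
     \sum_(k < n)
        (m%:R^-1 * (2 * dnorm d * (q i k - \sum_(j < n) px a i j k)) +
         -1 *
         (m%:R^-1 * (2 * dnorm d * (q i k - \sum_(j < n) px b i j k)))) *
        (pyc b i k + -1 * pyc c i k)
  = S3 (fun i j k => - K * (px a i j k - px b i j k) * (pyc b i k - pyc c i k)).
  rewrite /S3; apply: eq_bigr => i _; rewrite exchange_big /=; apply: eq_bigr => k _.
  rewrite -mulr_suml -mulr_sumr sumrB /K; ring.
rewrite Ex Ep Er Ec.
set X1 := S3 _. set X2 := S3 _. set X3 := S3 _. set Y1 := S2 _. set Y2 := S2 _.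
suff -> : S3 (fun i j k => K * (Bt (px a i j k) (px b i j k) (px c i j k) (pyr a i j) (pyr b i j) (pyr c i j)
                       + Bt (px a i j k) (px b i j k) (px c i j k) (pyc a i k) (pyc b i k) (pyc c i k)))
   = X1 + X2 + X3.
  suff -> : S2 (fun i j => - K * Bt (pp a j) (pp b j) (pp c j) (pyr a i j) (pyr b i j) (pyr c i j)) = Y1 + Y2.
    ring.
  rewrite /Y1 /Y2 -S2D; apply: S2_ext => i j; rewrite /Bt; ring.
rewrite /X1 /X2 /X3 -!S3D; apply: S3_ext => i j k; rewrite /Bt; ring.
Qed.

Lemma ER (R : realType) (n m : nat) (d : 'I_n -> 'I_n -> R) (z : pt R m n) :
  reg d z = 2 * dnorm d / m%:R *
   (S3 (fun i j k => hh (px z i j k) (pyr z i j) + hh (px z i j k) (pyc z i k))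
    + S2 (fun i j => hh (pp z j) (pyr z i j))).
Proof.
rewrite /reg; congr (_ * _).
have -> : S3 (fun i j k => hh (px z i j k) (pyr z i j) + hh (px z i j k) (pyc z i k)) =
  S3 (fun i j k => 10 * xlnx (px z i j k) + px z i j k * (pyr z i j ^+ 2 + pyc z i k ^+ 2)).
  by apply: S3_ext => i j k; rewrite /hh; ring.
have -> : S2 (fun i j => hh (pp z j) (pyr z i j)) = S2 (fun i j => 5 * xlnx (pp z j) + pp z j * pyr z i j ^+ 2) by [].
rewrite S3D S3Z S2D.
have -> : S2 (fun (i : 'I_m) j => 5 * xlnx (pp z j)) = 5 * m%:R * \sum_(j < n) xlnx (pp z j).
  by rewrite /S2 big_const_ord iter_addr_0 -mulr_natl -mulr_sumr; ring.
have -> : S2 (fun i j => pp z j * pyr z i j ^+ 2) = - \sum_(j < n) pp z j * - \sum_(i < m) pyr z i j ^+ 2.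
  rewrite /S2 exchange_big /= -sumrN; apply: eq_bigr => j _.
  by rewrite mulrN opprK mulr_sumr.
rewrite /S3; ring.
Qed.


Lemma dnorm_ge0 (R : realType) (n : nat) (d : 'I_n -> 'I_n -> R) : 0 <= dnorm d.
Proof.
rewrite /dnorm; apply: (big_ind (fun x : R => 0 <= x)) => //.
  by move=> x y hx hy; rewrite le_max hx.
move=> j _; apply: (big_ind (fun x : R => 0 <= x)) => //.
by move=> x y hx hy; rewrite le_max hx.
Qed.

Lemma fin (R : realType) (K Xa Xb Xc Xg Ya Yb Yc Yg : R) :
  3 * (K * (Xa + Ya) + K * (Xb + Yb) + K * (Xc + Yc) - 3 * (K * (Xg + Yg))) =
  3 * K * (Xa + Xb + Xc - 3 * Xg) + 3 * K * (Ya + Yb + Yc - 3 * Yg).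
Proof. ring. Qed.

Lemma aux (R : realType) (K X Y : R) : 0 <= K -> X <= 3 * Y -> K * X <= 3 * K * Y.
Proof. move=> K0 h; rewrite -mulrA mulrCA; exact: ler_wpM2l. Qed.
Lemma aux2 (R : realType) (K X Y : R) : 0 <= K -> - X <= 3 * Y -> - K * X <= 3 * K * Y.
Proof. by move=> K0 h; rewrite mulNr -mulrN; apply: aux. Qed.

Theorem theorem2 (R : realType) (n m : nat) (Hn : (1 <= n)%N) (Hm : (1 <= m)%N)
  (q : 'I_m -> 'I_n -> R) (d : 'I_n -> 'I_n -> R)
  (Hq : forall i, in_simplex (q i)) (Hd : forall j k, 0 <= d j k)
  (a b c : pt R m n) :
  inZ a -> inZ b -> inZ c ->
  pt_dot (pt_sub (Gop q d a) (Gop q d b)) (pt_sub b c)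
  <= 3 * (reg d a + reg d b + reg d c
          - 3 * reg d (pt_scale (3%:R^-1) (pt_add (pt_add a b) c))).
Proof.
move=> [xa [pa [yra yca]]] [xb [pb [yrb ycb]]] [xc [pc [yrc ycc]]].
rewrite EL !ER.
set K := 2 * dnorm d / m%:R.
have K0 : 0 <= K by rewrite /K divr_ge0 // mulr_ge0 // dnorm_ge0.
rewrite fin S3comb S2comb /=.
apply: lerD; [apply: S3_le => i j k | apply: S2_le => i j] => /=.
  have t1 := @tri R _ _ _ _ _ _ ((xa i).1 j k) ((xb i).1 j k) ((xc i).1 j k) (yra i j) (yrb i j) (yrc i j).
  have t2 := @tri R _ _ _ _ _ _ ((xa i).1 j k) ((xb i).1 j k) ((xc i).1 j k) (yca i k) (ycb i k) (ycc i k).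
  have u1 := le_trans (ler_norm _) t1.
  have u2 := le_trans (ler_norm _) t2.
  apply: aux K0 _; rewrite /Bt; lra.
have t1 := @tri R _ _ _ _ _ _ (pa.1 j) (pb.1 j) (pc.1 j) (yra i j) (yrb i j) (yrc i j).
rewrite -normrN in t1.
have u1 := le_trans (ler_norm _) t1.
apply: aux2 K0 _; rewrite /Bt; lra.
Qed.
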